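(* Let $A=(a_{\mathbf i})_{\mathbf i\in[n]^d}$ be a real $d$-tensor, $I\subseteq[d]$, and fix $\mathbf i_I\in[n]^I$. Call a set $C\subseteq[n]^d$ admissible if $\|(A\circ1_C)_{\mathbf i_{I^c}}\|_{\mathcal J}\le\|A_{\mathbf i_{I^c}}\|_{\mathcal J}$ for every real $d$-tensor $A$ and every partition $\mathcal J$ of $I^c$. Then: (1) every generalized row $C=\{\mathbf i: i_{k_1}=j_1,\dots,i_{k_l}=j_l\}$ ($1\le k_1<\dots<k_l\le d$, $j_1,\dots,j_l\in[n]$) is admissible; (2) every generalized diagonal $C=\{\mathbf i: i_k=i_l\ \forall k,l\in K\}$ ($K\subseteq[d]$) is admissible; (3) if $C_1,C_2$ are admissible, so is $C_1\cap C_2$; (4) for every partition $\mathcal K$ of $[d]$ and every partition $\mathcal J$ of $I^c$, $\|(A\circ1_{L(\mathcal K)})_{\mathbf i_{I^c}}\|_{\mathcal J}\le2^{|\mathcal K|(|\mathcal K|-1)/2}\|A_{\mathbf i_{I^c}}\|_{\mathcal J}$; (5) for all $v_1,\dots,v_d\in\mathbb{R}^n$ and every partition $\mathcal J$ of $I^c$, $\|(A\circ\bigotimes_{i=1}^dv_i)_{\mathbf i_{I^c}}\|_{\mathcal J}\le\|A_{\mathbf i_{I^c}}\|_{\mathcal J}\prod_{i=1}^d\|v_i\|_\infty$.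
   Context: $\circ$ denotes the entrywise product, $1_C$ the $0/1$ indicator tensor of $C\subseteq[n]^d$, $(v_1\otimes\cdots\otimes v_d)_{\mathbf i}=\prod_j(v_j)_{i_j}$. For $\mathcal K=\{K_1,\dots,K_a\}$ a partition of $[d]$, $L(\mathcal K)=\{\mathbf i\in[n]^d:i_k=i_l\iff\exists j:k,l\in K_j\}$. $B_{\mathbf i_{I^c}}$ is the tensor indexed by $[n]^{I^c}$ obtained from a $d$-tensor $B$ by fixing the indices in $I$ to $\mathbf i_I$. For a tensor $B$ indexed by $[n]^S$ and a partition $\mathcal J=\{J_1,\dots,J_k\}$ of $S$, $\|B\|_{\mathcal J}:=\sup\{\sum_{\mathbf i\in[n]^S}b_{\mathbf i}\prod_lx^{(l)}_{\mathbf i_{J_l}}:x^{(l)}\in\mathbb{R}^{[n]^{J_l}},\|x^{(l)}\|_2\le1\}$. If $I=[d]$, the only partition of $I^c$ is the empty one and the norm is $|a_{\mathbf i}|$. *)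

(* Defs.v *)
From HB Require Import structures.
From mathcomp Require Import all_boot.
From Stdlib Require Import Reals ClassicalEpsilon.

Set Implicit Arguments.
Unset Strict Implicit.
Unset Printing Implicit Defensive.

HB.instance Definition _ :=
  Monoid.isComLaw.Build R 0%R Rplus (fun a b c : R => esym (Rplus_assoc a b c : (a + b + c)%R = (a + (b + c))%R)) Rplus_comm Rplus_0_l.
HB.instance Definition _ :=
  Monoid.isComLaw.Build R 1%R Rmult (fun a b c : R => esym (Rmult_assoc a b c : (a * b * c)%R = (a * (b * c))%R)) Rmult_comm Rmult_1_l.

(* Supremum of a set of reals (least upper bound when it exists, else 0). *)
Definition Rsup (E : R -> Prop) : R :=
  match excluded_middle_informative (bound E /\ exists x, E x) with
  | left H => proj1_sig (completeness E (proj1 H) (proj2 H))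
  | right _ => 0%R
  end.

Definition Idx (n d : nat) := {ffun 'I_d -> 'I_n}.
Definition SIdx (n d : nat) (S : {set 'I_d}) := {ffun {i : 'I_d | i \in S} -> 'I_n}.

Definition tensor (n d : nat) := Idx n d -> R.

Definition hadamard n d (A B : tensor n d) : tensor n d := fun i => (A i * B i)%R.
Definition indic n d (C : {set Idx n d}) : tensor n d :=
  fun i => if i \in C then 1%R else 0%R.
Definition tprod n d (v : 'I_d -> 'I_n -> R) : tensor n d :=
  fun i => \big[Rmult/1%R]_(k < d) v k (i k).

Definition infnorm n (v : 'I_n -> R) : R := \big[Rmax/0%R]_(j < n) Rabs (v j).

(* The full index obtained from i0 (used on S^c) and ii (on S). *)
Definition ext n d (i0 : Idx n d) (S : {set 'I_d}) (ii : SIdx n S) : Idx n d :=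
  [ffun k => if (insub k : option {i : 'I_d | i \in S}) is Some k' then ii k'
             else i0 k].

Definition restr n d (f : Idx n d) (T : {set 'I_d}) : SIdx n T :=
  [ffun k => f (val k)].

(* ||A_{i_{I^c}}||_J : the norm of the slice of A obtained by fixing the
   coordinates in I to those of i0, w.r.t. a partition J of I^c.
   If I^c is empty, this is |a_{i0}|. *)
Definition sliceNorm n d (I : {set 'I_d}) (i0 : Idx n d) (A : tensor n d)
  (J : {set {set 'I_d}}) : R :=
  if ~: I == set0 then Rabs (A i0) else
  Rsup (fun v => exists x : forall T : {set 'I_d}, SIdx n T -> R,
     (forall T, T \in J -> (\big[Rplus/0%R]_(y : SIdx n T) (x T y ^ 2) <= 1)%R) /\
     v = \big[Rplus/0%R]_(ii : SIdx n (~: I))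
            (A (ext i0 ii) * \big[Rmult/1%R]_(T in J) x T (restr (ext i0 ii) T))%R).

(* Admissible sets C (relative to I and i_I = i0 restricted to I). *)
Definition admissible n d (I : {set 'I_d}) (i0 : Idx n d) (C : {set Idx n d}) :=
  forall (A : tensor n d) (J : {set {set 'I_d}}), partition J (~: I) ->
    (sliceNorm I i0 (hadamard A (indic C)) J <= sliceNorm I i0 A J)%R.

Definition genRow n d (K : {set 'I_d}) (j : 'I_d -> 'I_n) : {set Idx n d} :=
  [set i : Idx n d | [forall k in K, i k == j k]].

Definition genDiag n d (K : {set 'I_d}) : {set Idx n d} :=
  [set i : Idx n d | [forall k in K, forall l in K, i k == i l]].

Definition Lset n d (Kp : {set {set 'I_d}}) : {set Idx n d} :=
  [set i : Idx n d | [forall k, forall l,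
     (i k == i l) == [exists T in Kp, (k \in T) && (l \in T)]]].

(* Main.v *)
Require Import Defs.
From HB Require Import structures.
From mathcomp Require Import all_boot.
From Stdlib Require Import Reals Lra FunctionalExtensionality ClassicalEpsilon.

Set Implicit Arguments.
Unset Strict Implicit.
Unset Printing Implicit Defensive.

Local Open Scope R_scope.

Lemma sum_le (X : Type) (r : seq X) (P : pred X) (F G : X -> R) :
  (forall x, P x -> F x <= G x) ->
  \big[Rplus/0]_(x <- r | P x) F x <= \big[Rplus/0]_(x <- r | P x) G x.
Proof.
move=> H; apply: (big_ind2 (fun a b => a <= b)); [lra| |by []].
by move=> *; lra.
Qed.

Lemma sum_distr (X : Type) (r : seq X) (P : pred X) (F : X -> R) a :
  a * \big[Rplus/0]_(x <- r | P x) F x = \big[Rplus/0]_(x <- r | P x) (a * F x).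
Proof.
apply: (big_ind2 (fun u v => a * u = v)); [ring| |by []].
by move=> x1 x2 y1 y2 <- <-; ring.
Qed.

Lemma prod_mul (X : Type) (r : seq X) (P : pred X) (F G : X -> R) :
  \big[Rmult/1]_(x <- r | P x) (F x * G x) =
  \big[Rmult/1]_(x <- r | P x) F x * \big[Rmult/1]_(x <- r | P x) G x.
Proof. exact: big_split. Qed.

Lemma sum_ge0 (X : Type) (r : seq X) (P : pred X) (F : X -> R) :
  (forall x, P x -> 0 <= F x) -> 0 <= \big[Rplus/0]_(x <- r | P x) F x.
Proof. move=> H; apply: (big_ind (fun a => 0 <= a)); [lra| |by []]. by move=> *; lra. Qed.

Lemma prod_abs_le1 (X : Type) (r : seq X) (P : pred X) (F : X -> R) :
  (forall x, P x -> Rabs (F x) <= 1) -> Rabs (\big[Rmult/1]_(x <- r | P x) F x) <= 1.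
Proof.
move=> H; apply: (big_ind (fun a => Rabs a <= 1)); [rewrite Rabs_R1; lra| |by []].
move=> a b Ha Hb; rewrite Rabs_mult.
have := Rabs_pos a; have := Rabs_pos b; nra.
Qed.

Lemma prod_ge0 (X : Type) (r : seq X) (P : pred X) (F : X -> R) :
  (forall x, P x -> 0 <= F x) -> 0 <= \big[Rmult/1]_(x <- r | P x) F x.
Proof. move=> H; apply: (big_ind (fun a => 0 <= a)); [lra| |by []]. by move=> *; nra. Qed.

Lemma sq_le1 z : Rabs z <= 1 -> z ^ 2 <= 1.
Proof. move=> H; rewrite -pow2_abs; have := Rabs_pos z; nra. Qed.

Lemma term_le_sum (T : finType) (F : T -> R) (y : T) :
  (forall x, 0 <= F x) -> F y <= \big[Rplus/0]_(x : T) F x.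
Proof.
move=> H; rewrite (bigD1 y) //=.
have : 0 <= \big[Rplus/0]_(i | i != y) F i by apply: sum_ge0.
lra.
Qed.

Lemma prod01 (T : finType) (P : pred T) (b : pred T) :
  \big[Rmult/1]_(x | P x) (if b x then 1 else 0) =
  if [forall x, P x ==> b x] then 1 else 0.
Proof.
case: (boolP [forall x, P x ==> b x]) => H.
  apply: big1 => x Px; have := forallP H x; rewrite Px /= => -> //.
move/forallPn: H => [x]; rewrite negb_imply => /andP [Px nbx].
by rewrite (bigD1 x) //= (negbTE nbx) Rmult_0_l.
Qed.

Lemma ext_out n d (i0 : Idx n d) (S : {set 'I_d}) (ii : SIdx n S) k :
  k \notin S -> ext i0 ii k = i0 k.
Proof. by move=> H; rewrite /ext ffunE insubN. Qed.

Lemma card_ffun_2 m : #|{ffun 'I_m -> bool}| = expn 2 m.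
Proof. by rewrite card_ffun card_bool card_ord. Qed.

Definition sgn (b : bool) : R := if b then 1 else -1.

Lemma iter_plus1 k : iter k (Rplus 1) 0 = INR k.
Proof. elim: k => [|k IH] //; rewrite iterS IH S_INR; ring. Qed.

Lemma sum_one (T : finType) : \big[Rplus/0]_(e : T) 1 = INR #|T|.
Proof. by rewrite big_const iter_plus1. Qed.

Lemma sign_sum m (a b : 'I_m) :
  \big[Rplus/0]_(e : {ffun 'I_m -> bool}) (sgn (e a) * sgn (e b)) =
  if a == b then INR (expn 2 m) else 0.
Proof.
case: eqP => [<-|Hab].
  have E : #|{ffun 'I_m -> bool}| = expn 2 m.
    by rewrite card_ffun card_bool card_ord.
  rewrite -E -sum_one; apply: eq_bigr => e _; rewrite /sgn; case: (e a); ring.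
pose fl (e : {ffun 'I_m -> bool}) : {ffun 'I_m -> bool} :=
  [ffun c => if c == a then ~~ e c else e c].
have flK : involutive fl.
  move=> e; apply/ffunP => c; rewrite !ffunE; case: (c == a) => //; by rewrite negbK.
set S := \big[Rplus/0]_(e : {ffun 'I_m -> bool}) _.
have : S = - S.
  rewrite {1}/S (reindex_inj (inv_inj flK)) /=.
  have -> : - S = -1 * S by ring.
  rewrite /S sum_distr; apply: eq_bigr => e _; rewrite /fl !ffunE eqxx.
  have -> : (b == a) = false by apply/eqP => E; apply: Hab; rewrite E.
  rewrite /sgn; case: (e a); case: (e b) => /=; ring.
lra.
Qed.

Local Close Scope R_scope.
Lemma diagP n d (X : {set 'I_d}) (i : Idx n d) :
  reflect (forall p q, p \in X -> q \in X -> i p = i q) (i \in genDiag n X).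
Proof.
rewrite inE; apply: (iffP forallP) => H.
  move=> p q pX qX; have := H p; rewrite pX /= => /forallP /(_ q); rewrite qX /=.
  by move/eqP.
move=> p; apply/implyP => pX; apply/forallP => q; apply/implyP => qX; apply/eqP.
exact: H.
Qed.

Lemma Lmem n d (Kp : {set {set 'I_d}}) (i : Idx n d) :
  partition Kp [set: 'I_d] ->
  (i \in Lset n Kp) =
  [forall T, (T \in Kp) ==> (i \in genDiag n T)] &&
  [forall b : 'I_#|Kp|, forall a : 'I_b,
     i \notin genDiag n (nth set0 (enum Kp) a :|: nth set0 (enum Kp) b)].
Proof.
case/and3P => /eqP Hcov Htriv H0.
set s := enum Kp.
have Hsz : size s = #|Kp| by rewrite cardE.
have Hu : uniq s by apply: enum_uniq.
have HmemB : forall a, a < #|Kp| -> nth set0 s a \in Kp.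
  by move=> a Ha; rewrite -mem_enum mem_nth // Hsz.
have Hne : forall T, T \in Kp -> exists k, k \in T.
  move=> T TK; have : T != set0.
    by apply/eqP => E; move: H0; rewrite -E TK.
  by case/set0Pn => k; exists k.
have Hcv : forall k, k \in cover Kp by move=> k; rewrite Hcov inE.
apply/idP/idP.
- rewrite inE => /forallP HL.
  have Heq : forall k l, (i k == i l) = [exists T in Kp, (k \in T) && (l \in T)].
    by move=> k l; move: (HL k) => /forallP /(_ l) /eqP.
  apply/andP; split.
    apply/forallP => T; apply/implyP => TK; apply/diagP => p q pT qT; apply/eqP.
    by rewrite Heq; apply/existsP; exists T; rewrite TK pT qT.
  apply/forallP => b; apply/forallP => a; apply/diagP => Hd.
  have Hab : a < b by [].
  have Ha : a < #|Kp| by apply: ltn_trans Hab (ltn_ord b).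
  have [k kA] := Hne _ (HmemB _ Ha).
  have [l lB] := Hne _ (HmemB _ (ltn_ord b)).
  have : i k == i l by apply/eqP; apply: Hd; rewrite inE ?kA ?lB ?orbT.
  rewrite Heq => /existsP [T /andP [TK /andP [kT lT]]].
  have E1 := def_pblock Htriv TK kT.
  have E2 := def_pblock Htriv (HmemB _ Ha) kA.
  have E3 := def_pblock Htriv TK lT.
  have E4 := def_pblock Htriv (HmemB _ (ltn_ord b)) lB.
  have : nth set0 s a == nth set0 s b by rewrite -E2 E1 -E3 E4.
  rewrite nth_uniq ?Hsz // => /eqP Eab.
  by move: Hab; rewrite Eab ltnn.
- case/andP => /forallP Hw /forallP Hx.
  rewrite inE; apply/forallP => k; apply/forallP => l; apply/eqP.
  set Tk := pblock Kp k; set Tl := pblock Kp l.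
  have TkK : Tk \in Kp by apply: pblock_mem.
  have TlK : Tl \in Kp by apply: pblock_mem.
  have kTk : k \in Tk by rewrite mem_pblock.
  have lTl : l \in Tl by rewrite mem_pblock.
  have Dk : forall p q, p \in Tk -> q \in Tk -> i p = i q.
    by apply/diagP; move: (Hw Tk); rewrite TkK.
  have Dl : forall p q, p \in Tl -> q \in Tl -> i p = i q.
    by apply/diagP; move: (Hw Tl); rewrite TlK.
  case: (eqVneq Tk Tl) => E.
    have -> : i k == i l by apply/eqP; apply: Dk => //; rewrite E.
    by apply/esym/existsP; exists Tk; rewrite TkK kTk E lTl.
  have -> : [exists T in Kp, (k \in T) && (l \in T)] = false.
    apply/existsP => [[T /andP [TK /andP [kT lT]]]].
    move: E; by rewrite /Tk /Tl (def_pblock Htriv TK kT) (def_pblock Htriv TK lT) eqxx.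
  apply/negP => /eqP ikl.
  have Hdiag : i \in genDiag n (Tk :|: Tl).
    apply/diagP => p q.
    have Hv : forall r, r \in Tk :|: Tl -> i r = i k.
      move=> r; rewrite inE => /orP [rT|rT]; first by apply: Dk.
      by rewrite ikl; apply: Dl.
    by move=> pU qU; rewrite (Hv p pU) (Hv q qU).
  have ia : index Tk s < #|Kp| by rewrite -Hsz index_mem mem_enum.
  have ib : index Tl s < #|Kp| by rewrite -Hsz index_mem mem_enum.
  have Na : nth set0 s (index Tk s) = Tk by rewrite nth_index // mem_enum.
  have Nb : nth set0 s (index Tl s) = Tl by rewrite nth_index // mem_enum.
  case: (ltngtP (index Tk s) (index Tl s)) => Hc.
  + move: (Hx (Ordinal ib)) => /forallP /(_ (Ordinal Hc)) /=.
    by rewrite Na Nb Hdiag.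
  + move: (Hx (Ordinal ia)) => /forallP /(_ (Ordinal Hc)) /=.
    by rewrite Na Nb setUC Hdiag.
  + by move: E; rewrite -Na Hc Nb eqxx.
Qed.

Local Open Scope R_scope.
Lemma prod01T (T : finType) (b : pred T) :
  \big[Rmult/1]_(x : T) (if b x then 1 else 0) = if [forall x, b x] then 1 else 0.
Proof.
case: (boolP [forall x, b x]) => H.
  apply: big1 => x _; by rewrite (forallP H x).
move/forallPn: H => [x nbx].
by rewrite (bigD1 x) //= (negbTE nbx) Rmult_0_l.
Qed.

Section Main.
Variables (n d : nat) (I : {set 'I_d}) (i0 : Idx n d) (J : {set {set 'I_d}}).
Hypothesis HJ : partition J (~: I).

Definition xtype := forall T : {set 'I_d}, SIdx n T -> R.
Definition adm (x : xtype) :=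
  forall T, T \in J -> \big[Rplus/0]_(y : SIdx n T) (x T y ^ 2) <= 1.
Definition Sx (B : tensor n d) (x : xtype) :=
  \big[Rplus/0]_(ii : SIdx n (~: I))
     (B (ext i0 ii) * \big[Rmult/1]_(T in J) x T (restr (ext i0 ii) T)).
Definition sN (B : tensor n d) := sliceNorm I i0 B J.

Lemma coverJ : cover J = ~: I.
Proof. by case/and3P: HJ => /eqP. Qed.
Lemma trivJ : trivIset J.
Proof. by case/and3P: HJ. Qed.

Lemma exT1 : ~: I != set0 -> exists T1, T1 \in J.
Proof.
case/set0Pn=> k kI; exists (pblock J k); apply: pblock_mem; by rewrite coverJ.
Qed.

Lemma adm_abs x T y : adm x -> T \in J -> Rabs (x T y) <= 1.
Proof.
move=> Ha TJ; have H := Ha T TJ.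
have : x T y ^ 2 <= 1.
  apply: Rle_trans _ H; apply: (@term_le_sum {ffun {i : 'I_d | i \in T} -> 'I_n} (fun y => x T y ^ 2)) => z; apply: pow2_ge_0.
rewrite -pow2_abs => H2; have := Rabs_pos (x T y); nra.
Qed.

Lemma Sx_bound B x : adm x -> Sx B x <= \big[Rplus/0]_(ii : SIdx n (~: I)) Rabs (B (ext i0 ii)).
Proof.
move=> Ha; apply: sum_le => ii _.
set p := (X in _ * X).
have : Rabs p <= 1 by apply: prod_abs_le1 => T TJ; apply: adm_abs.
move=> Hp; apply: Rle_trans (Rle_abs _) _; rewrite Rabs_mult.
have := Rabs_pos (B (ext i0 ii)); have := Rabs_pos p; nra.
Qed.

Definition x0 : xtype := fun T y => 0.
Lemma adm_x0 : adm x0.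
Proof. move=> T _; rewrite big1; [lra| move=> y _; rewrite /x0; ring]. Qed.

Lemma Rsup_lub (E : R -> Prop) : bound E -> (exists x, E x) -> is_lub E (Rsup E).
Proof.
move=> Hb He; rewrite /Rsup; case: excluded_middle_informative => [H|H].
  by case: (completeness _ _ _).
by exfalso; apply: H.
Qed.

Lemma sN_lub B : ~: I != set0 ->
  is_lub (fun v => exists x, adm x /\ v = Sx B x) (sN B).
Proof.
move=> H; rewrite /sN /sliceNorm (negbTE H); apply: Rsup_lub.
  exists (\big[Rplus/0]_(ii : SIdx n (~: I)) Rabs (B (ext i0 ii))).
  by move=> v [x [Ha ->]]; apply: Sx_bound.
by exists (Sx B x0), x0; split => //; apply: adm_x0.
Qed.

Lemma le_sN B x : ~: I != set0 -> adm x -> Sx B x <= sN B.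
Proof. move=> H Ha; case: (sN_lub B H) => Hu _; apply: Hu; by exists x. Qed.

Lemma sN_le B M : ~: I != set0 -> (forall x, adm x -> Sx B x <= M) -> sN B <= M.
Proof.
move=> H Hx; case: (sN_lub B H) => _ Hl; apply: Hl => v [x [Ha ->]]; by apply: Hx.
Qed.

Lemma sN_empty B : ~: I == set0 -> sN B = Rabs (B i0).
Proof. by move=> H; rewrite /sN /sliceNorm H. Qed.

Definition scalex (T1 : {set 'I_d}) (c : R) (x : xtype) : xtype :=
  fun T y => if T == T1 then c * x T y else x T y.

Lemma Sx_scale T1 c x B : T1 \in J -> Sx B (scalex T1 c x) = c * Sx B x.
Proof.
move=> HT1; rewrite /Sx sum_distr; apply: eq_bigr => ii _.
rewrite (bigD1 T1) //= (bigD1 T1 HT1) /= /scalex eqxx.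
have -> : \big[Rmult/1]_(i in J | i != T1)
   (if i == T1 then c * x i (restr (ext i0 ii) i) else x i (restr (ext i0 ii) i)) =
   \big[Rmult/1]_(i in J | i != T1) x i (restr (ext i0 ii) i).
  by apply: eq_bigr => T /andP [_ /negbTE ->].
match goal with |- _ * (_ * ?p) = _ * (_ * (_ * ?q)) => have -> : q = p by [] end; ring.
Qed.

Lemma adm_scale T1 c x : c ^ 2 <= 1 -> adm x -> adm (scalex T1 c x).
Proof.
move=> Hc Ha T TJ; apply: Rle_trans (Ha T TJ); apply: sum_le => y _.
rewrite /scalex; case: (T == T1); last lra.
have := pow2_ge_0 (x T y); rewrite Rpow_mult_distr; nra.
Qed.

Lemma Sx_abs B x : ~: I != set0 -> adm x -> Rabs (Sx B x) <= sN B.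
Proof.
move=> H Ha; case: (exT1 H) => T1 HT1.
apply: Rabs_le; split; last by apply: le_sN.
have : Sx B (scalex T1 (-1) x) <= sN B.
  by apply: le_sN => //; apply: adm_scale => //; simpl; lra.
rewrite Sx_scale //; lra.
Qed.

Lemma sN_ge0 B : 0 <= sN B.
Proof.
case: (boolP (~: I == set0)) => H; first by rewrite sN_empty //; apply: Rabs_pos.
apply: Rle_trans (Rabs_pos _) (Sx_abs B H adm_x0).
Qed.


Definition good (f : tensor n d) (c : R) :=
  forall B : tensor n d, sN (hadamard B f) <= c * sN B.

Lemma Sx_add B1 B2 x : Sx (fun i => B1 i + B2 i) x = Sx B1 x + Sx B2 x.
Proof. rewrite /Sx -big_split; apply: eq_bigr => ii _ /=; ring. Qed.

Lemma Sx_opp B x : Sx (fun i => - B i) x = - Sx B x.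
Proof.
have -> : - Sx B x = -1 * Sx B x by ring.
rewrite /Sx sum_distr; apply: eq_bigr => ii _ /=; ring.
Qed.

Lemma Sx_scal a B x : Sx (fun i => a * B i) x = a * Sx B x.
Proof. rewrite /Sx sum_distr; apply: eq_bigr => ii _ /=; ring. Qed.

Lemma sN_add B1 B2 : sN (fun i => B1 i + B2 i) <= sN B1 + sN B2.
Proof.
case: (boolP (~: I == set0)) => H.
  rewrite !sN_empty //; apply: Rabs_triang.
apply: sN_le => // x Ha; rewrite Sx_add.
have := le_sN B1 H Ha; have := le_sN B2 H Ha; lra.
Qed.

Lemma sN_opp B : sN (fun i => - B i) <= sN B.
Proof.
case: (boolP (~: I == set0)) => H.
  rewrite !sN_empty // Rabs_Ropp; lra.
apply: sN_le => // x Ha; rewrite Sx_opp.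
have := Sx_abs B H Ha; have := Rle_abs (- Sx B x); rewrite Rabs_Ropp; lra.
Qed.

Lemma sN_scal a B : 0 <= a -> sN (fun i => a * B i) <= a * sN B.
Proof.
move=> Ha0; case: (boolP (~: I == set0)) => H.
  rewrite !sN_empty // Rabs_mult Rabs_pos_eq //; lra.
apply: sN_le => // x Ha; rewrite Sx_scal.
have := le_sN B H Ha; nra.
Qed.

Lemma good_ext f g c : (forall i, f i = g i) -> good f c -> good g c.
Proof. by move=> E; have -> : f = g by apply: functional_extensionality. Qed.

Lemma good_le f c c' : c <= c' -> good f c -> good f c'.
Proof.
move=> Hc Hg B; apply: Rle_trans (Hg B) _; have := sN_ge0 B; nra.
Qed.

Lemma good_one : good (fun _ => 1) 1.
Proof.
move=> B; have -> : hadamard B (fun _ => 1) = B.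
  by apply: functional_extensionality => i; rewrite /hadamard Rmult_1_r.
lra.
Qed.

Lemma good_zero : good (fun _ => 0) 0.
Proof.
move=> B; rewrite Rmult_0_l.
case: (boolP (~: I == set0)) => H.
  rewrite sN_empty // /hadamard Rmult_0_r Rabs_R0; lra.
apply: sN_le => // x Ha; rewrite /Sx big1 /=; first lra.
move=> ii _; rewrite /hadamard; ring.
Qed.

Lemma good_mul f g c c' : 0 <= c -> good f c -> good g c' ->
  good (fun i => f i * g i) (c * c').
Proof.
move=> Hc Hf Hg B.
have -> : hadamard B (fun i => f i * g i) = hadamard (hadamard B g) f.
  by apply: functional_extensionality => i; rewrite /hadamard; ring.
apply: Rle_trans (Hf _) _; rewrite Rmult_assoc; apply: Rmult_le_compat_l => //.
Qed.

Lemma good_add f g c c' : good f c -> good g c' -> good (fun i => f i + g i) (c + c').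
Proof.
move=> Hf Hg B.
have -> : hadamard B (fun i => f i + g i) =
          (fun i => hadamard B f i + hadamard B g i).
  by apply: functional_extensionality => i; rewrite /hadamard; ring.
apply: Rle_trans (sN_add _ _) _; have := Hf B; have := Hg B; lra.
Qed.

Lemma good_opp f c : good f c -> good (fun i => - f i) c.
Proof.
move=> Hf B.
have -> : hadamard B (fun i => - f i) = (fun i => - hadamard B f i).
  by apply: functional_extensionality => i; rewrite /hadamard; ring.
apply: Rle_trans (sN_opp _) (Hf B).
Qed.

Lemma good_scal a f c : 0 <= a -> good f c -> good (fun i => a * f i) (a * c).
Proof.
move=> Ha Hf B.
have -> : hadamard B (fun i => a * f i) = (fun i => a * hadamard B f i).
  by apply: functional_extensionality => i; rewrite /hadamard; ring.
apply: Rle_trans (sN_scal _ Ha) _; rewrite Rmult_assoc.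
by apply: Rmult_le_compat_l => //.
Qed.

Lemma good_sum (X : Type) (r : seq X) (P : pred X) (F : X -> tensor n d) (c : X -> R) :
  (forall t, P t -> good (F t) (c t)) ->
  good (fun i => \big[Rplus/0]_(t <- r | P t) F t i) (\big[Rplus/0]_(t <- r | P t) c t).
Proof.
move=> H; elim: r => [|t r IH].
  rewrite big_nil; apply: (good_ext _ good_zero) => i; by rewrite big_nil.
rewrite big_cons; case: (boolP (P t)) => Pt.
  apply: (good_ext _ (good_add (H t Pt) IH)) => i; by rewrite big_cons Pt.
apply: (good_ext _ IH) => i; by rewrite big_cons (negbTE Pt).
Qed.

Lemma good_prod (X : Type) (r : seq X) (P : pred X) (F : X -> tensor n d) (c : X -> R) :
  (forall t, P t -> good (F t) (c t)) -> (forall t, P t -> 0 <= c t) ->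
  good (fun i => \big[Rmult/1]_(t <- r | P t) F t i) (\big[Rmult/1]_(t <- r | P t) c t).
Proof.
move=> H H0; elim: r => [|t r IH].
  rewrite big_nil; apply: (good_ext _ good_one) => i; by rewrite big_nil.
rewrite big_cons; case: (boolP (P t)) => Pt.
  apply: (good_ext _ (good_mul (H0 t Pt) (H t Pt) IH)) => i; by rewrite big_cons Pt.
apply: (good_ext _ IH) => i; by rewrite big_cons (negbTE Pt).
Qed.


Definition Pw (w : 'I_d -> 'I_n -> R) (T : {set 'I_d}) (y : SIdx n T) : R :=
  \big[Rmult/1]_(k < d)
    (match (insub k : option {i : 'I_d | i \in T}) with
     | Some k' => w k (y k') | None => 1 end).

Lemma Pw_restr w T (f : Idx n d) :
  Pw w (restr f T) = \big[Rmult/1]_(k in T) w k (f k).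
Proof.
rewrite /Pw [RHS]big_mkcond; apply: eq_bigr => k _.
case: insubP => [k' kT <-|/negbTE ->] //=.
by rewrite (valP k') /restr ffunE.
Qed.

Lemma Pw_abs w (T : {set 'I_d}) (y : SIdx n T) : (forall k a, Rabs (w k a) <= 1) -> Rabs (Pw w y) <= 1.
Proof.
move=> Hw; apply: prod_abs_le1 => k _; case: insub => [k'|] //.
rewrite Rabs_R1; lra.
Qed.

Lemma tprod_split w (ii : SIdx n (~: I)) :
  tprod w (ext i0 ii) = (\big[Rmult/1]_(k in I) w k (i0 k)) *
     \big[Rmult/1]_(T in J) \big[Rmult/1]_(k in T) w k (ext i0 ii k).
Proof.
rewrite /tprod (bigID (fun k => k \in I)) /=.
congr (_ * _).
  apply: eq_bigr => k kI; rewrite ext_out //; by rewrite inE kI.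
rewrite -big_trivIset; last exact: trivJ.
rewrite coverJ; apply: eq_bigl => k; by rewrite inE.
Qed.

Lemma good_tprod1 (w : 'I_d -> 'I_n -> R) :
  (forall k a, Rabs (w k a) <= 1) -> good (tprod w) 1.
Proof.
move=> Hw B.
have Hc0 : Rabs (\big[Rmult/1]_(k in I) w k (i0 k)) <= 1.
  by apply: prod_abs_le1.
case: (boolP (~: I == set0)) => H.
  rewrite !sN_empty // /hadamard Rabs_mult.
  have Ht : Rabs (tprod w i0) <= 1 by apply: prod_abs_le1.
  have := Rabs_pos (B i0); have := Rabs_pos (tprod w i0); nra.
apply: sN_le => // x Ha.
case: (exT1 H) => T1 HT1.
set c0 := \big[Rmult/1]_(k in I) w k (i0 k).
pose x' : xtype := fun T y => x T y * Pw w y.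
have Ha' : adm (scalex T1 c0 x').
  apply: adm_scale; first by apply: sq_le1.
  move=> T TJ; apply: Rle_trans (Ha T TJ); apply: sum_le => y _.
  rewrite /x' Rpow_mult_distr.
  have := sq_le1 (Pw_abs y Hw); have := pow2_ge_0 (x T y); nra.
have -> : Sx (hadamard B (tprod w)) x = Sx B (scalex T1 c0 x').
  rewrite Sx_scale // /Sx sum_distr; apply: eq_bigr => ii _.
  rewrite /hadamard tprod_split -/c0 /x' prod_mul /=.
  have -> : \big[Rmult/1]_(i in J) Pw w (restr (ext i0 ii) i) =
            \big[Rmult/1]_(T in J) \big[Rmult/1]_(k in T) w k (ext i0 ii k).
    by apply: eq_bigr => T _; rewrite Pw_restr.
  set p := \big[Rmult/1]_(T in J) \big[Rmult/1]_(k in T) _. set q := \big[Rmult/1]_(T in J) x T _. set b := B _. ring.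
rewrite Rmult_1_l; exact: le_sN.
Qed.


Lemma Rmax_ge (X : eqType) (r : seq X) (F : X -> R) a :
  a \in r -> F a <= \big[Rmax/0]_(j <- r) F j.
Proof.
elim: r => [//|t r IH]; rewrite inE big_cons => /orP [/eqP ->|ar].
  apply: Rmax_l.
apply: Rle_trans (IH ar) (Rmax_r _ _).
Qed.

Lemma infnorm_ge0 m (v : 'I_m -> R) : 0 <= infnorm v.
Proof.
apply: (big_ind (fun z => 0 <= z)); [lra| |move=> i _; apply: Rabs_pos].
move=> a b Ha _; apply: Rle_trans Ha (Rmax_l _ _).
Qed.

Lemma infnorm_ge m (v : 'I_m -> R) a : Rabs (v a) <= infnorm v.
Proof. exact: (Rmax_ge (fun j => Rabs (v j)) (mem_index_enum a)). Qed.

Lemma good_tprod (v : 'I_d -> 'I_n -> R) :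
  good (tprod v) (\big[Rmult/1]_(k < d) infnorm (v k)).
Proof.
pose w k a := match Req_dec_T (infnorm (v k)) 0 with
              | left _ => 0 | right _ => v k a / infnorm (v k) end.
have Hw : forall k a, Rabs (w k a) <= 1.
  move=> k a; rewrite /w; case: (Req_dec_T (infnorm (v k)) 0) => [_|Hne]; first by rewrite Rabs_R0; lra.
  have H0 := infnorm_ge0 (v k); have H1 := infnorm_ge (v k) a.
  have Hm : 0 < infnorm (v k) by lra.
  have Hi : 0 < / infnorm (v k) by apply: Rinv_0_lt_compat.
  rewrite /Rdiv Rabs_mult (Rabs_pos_eq (/ infnorm (v k))); last lra.
  replace 1 with (infnorm (v k) * / infnorm (v k)) by (field; lra).
  apply: Rmult_le_compat_r; lra.
have Hv : forall k a, v k a = infnorm (v k) * w k a.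
  move=> k a; rewrite /w; case: (Req_dec_T (infnorm (v k)) 0) => [E|Hne].
    have := infnorm_ge (v k) a; rewrite E => H.
    have H2 := Rabs_pos (v k a); have : Rabs (v k a) = 0 by lra.
    move=> H3; have -> : v k a = 0.
      by case: (Req_dec_T (v k a) 0) => // /Rabs_no_R0.
    ring.
  field; exact: Hne.
have Hpos : 0 <= \big[Rmult/1]_(k < d) infnorm (v k).
  by apply: prod_ge0 => k _; apply: infnorm_ge0.
have := good_scal Hpos (good_tprod1 Hw).
rewrite Rmult_1_r => Hg; apply: (good_ext _ Hg) => i.
rewrite /tprod -prod_mul; apply: eq_bigr => k _; by rewrite -Hv.
Qed.

Lemma good_coord k (h : 'I_n -> R) : (forall a, Rabs (h a) <= 1) ->
  good (fun i => h (i k)) 1.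
Proof.
move=> Hh.
have := good_tprod1 (w := fun m a => if m == k then h a else 1) _.
move=> /(_ _) H; apply: (good_ext _ (H _)).
  move=> i; rewrite /tprod (bigD1 k) //= eqxx big1 ?Rmult_1_r // => m /negbTE -> //.
move=> m a; case: (m == k) => //; rewrite Rabs_R1; lra.
Qed.


Lemma good_delta k l : good (fun i => if i k == i l then 1 else 0) 1.
Proof.
have Hn : 0 < INR (expn 2 n).
  apply: lt_0_INR; apply/ltP; by rewrite expn_gt0.
set c := / INR (expn 2 n).
have Hc : 0 < c by apply: Rinv_0_lt_compat.
have Hg : good (fun i => c * \big[Rplus/0]_(e : {ffun 'I_n -> bool})
                   (sgn (e (i k)) * sgn (e (i l))))
               (c * \big[Rplus/0]_(e : {ffun 'I_n -> bool}) (1 * 1)).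
  apply: good_scal; first lra.
  apply: good_sum => e _.
  have He : forall a, Rabs (sgn (e a)) <= 1.
    by move=> a; rewrite /sgn; case: (e a); rewrite ?Rabs_Ropp Rabs_R1; lra.
  apply: (good_mul (f := fun i => sgn (e (i k))) (g := fun i => sgn (e (i l)))).
  - lra.
  - exact: (good_coord k He).
  - exact: (good_coord l He).
have Hg2 : good (fun i => if i k == i l then 1 else 0)
               (c * \big[Rplus/0]_(e : {ffun 'I_n -> bool}) (1 * 1)).
  apply: (good_ext _ Hg) => i.
  rewrite sign_sum; case: (i k == i l); rewrite /c; [field; lra| ring].
have E : c * \big[Rplus/0]_(e : {ffun 'I_n -> bool}) (1 * 1) = 1.
  have -> : \big[Rplus/0]_(e : {ffun 'I_n -> bool}) (1 * 1) = INR (expn 2 n).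
    rewrite -(card_ffun_2 n) -sum_one; apply: eq_bigr => e _; ring.
  rewrite /c; field; lra.
by rewrite E in Hg2.
Qed.


Lemma prod1 (X : Type) (r : seq X) (P : pred X) :
  \big[Rmult/1]_(x <- r | P x) 1 = 1.
Proof. by apply: big1. Qed.

Lemma good_row K (j : 'I_d -> 'I_n) : good (indic (genRow K j)) 1.
Proof.
have H : good (fun i : Idx n d => \big[Rmult/1]_(k | k \in K) (if i k == j k then 1 else 0))
              (\big[Rmult/1]_(k | k \in K) 1).
  apply: good_prod => k _; last lra.
  apply: (good_coord k (h := fun a => if a == j k then 1 else 0)) => a.
  case: (a == j k); rewrite ?Rabs_R1 ?Rabs_R0; lra.
rewrite prod1 in H; apply: (good_ext _ H) => i.
by rewrite prod01 /indic inE.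
Qed.

Lemma good_diag K : good (indic (genDiag n K)) 1.
Proof.
have H : good (fun i : Idx n d => \big[Rmult/1]_(k | k \in K)
                  \big[Rmult/1]_(l | l \in K) (if i k == i l then 1 else 0))
              (\big[Rmult/1]_(k | k \in K) \big[Rmult/1]_(l | l \in K) 1).
  apply: good_prod => k _; last by rewrite prod1; lra.
  by apply: good_prod => l _; [apply: good_delta | lra].
have E : \big[Rmult/1]_(k | k \in K) \big[Rmult/1]_(l | l \in K) 1 = 1.
  by apply: big1 => k _; apply: prod1.
rewrite E in H.
apply: (good_ext _ H) => i.
rewrite (eq_bigr (fun k => if [forall l, (l \in K) ==> (i k == i l)] then 1 else 0)).
  by rewrite prod01 /indic inE.
by move=> k _; rewrite prod01.
Qed.


Lemma good_1m X : good (fun i => 1 - indic (genDiag n X) i) (1 + 1).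
Proof.
apply: (good_ext _ (good_add good_one (good_opp (good_diag X)))) => i //.
Qed.

Lemma good_L Kp : partition Kp [set: 'I_d] ->
  good (indic (Lset n Kp))
       (\big[Rmult/1]_(b < #|Kp|) \big[Rmult/1]_(a < b) (1 + 1)).
Proof.
move=> HK.
have H1 : good (fun i => \big[Rmult/1]_(T | T \in Kp) indic (genDiag n T) i)
               (\big[Rmult/1]_(T | T \in Kp) 1).
  by apply: good_prod => T _; [apply: good_diag | lra].
rewrite prod1 in H1.
have H2 : good (fun i => \big[Rmult/1]_(b < #|Kp|) \big[Rmult/1]_(a < b)
                  (1 - indic (genDiag n (nth set0 (enum Kp) a :|: nth set0 (enum Kp) b)) i))
               (\big[Rmult/1]_(b < #|Kp|) \big[Rmult/1]_(a < b) (1 + 1)).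
  apply: good_prod => b _.
    by apply: good_prod => a _; [apply: good_1m | lra].
  by apply: prod_ge0 => a _; lra.
have H := good_mul (Rle_0_1) H1 H2; rewrite Rmult_1_l in H.
apply: (good_ext _ H) => i.
rewrite (eq_bigr (fun T => if i \in genDiag n T then 1 else 0)) // prod01.
rewrite (eq_bigr (fun b : 'I_#|Kp| => if [forall a : 'I_b,
     i \notin genDiag n (nth set0 (enum Kp) a :|: nth set0 (enum Kp) b)] then 1 else 0)).
  rewrite prod01T /indic Lmem //.
  case: [forall T, _]; case: [forall b, _]; rewrite /=; ring.
move=> b _; rewrite -prod01T; apply: eq_bigr => a _.
rewrite /indic; case: (i \in _); rewrite /=; ring.
Qed.

End Main.

Lemma iter_mult2 b : iter b (Rmult (1 + 1)) 1 = 2 ^ b.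
Proof. elim: b => [|b IH] //; rewrite iterS IH /=; ring. Qed.

Lemma const_pow m :
  \big[Rmult/1]_(b < m) \big[Rmult/1]_(a < b) (1 + 1) = 2 ^ (\sum_(b < m) b)%N.
Proof.
elim: m => [|m IH]; first by rewrite !big_ord0.
rewrite big_ord_recr /= IH big_ord_recr /= pow_add big_const_ord iter_mult2 //.
Qed.

Lemma good_adm n d (I : {set 'I_d}) (i0 : Idx n d) (C : {set Idx n d}) :
  (forall J, partition J (~: I) -> good I i0 J (indic C) 1) -> admissible I i0 C.
Proof.
move=> H A J HJ; have := H J HJ A; rewrite Rmult_1_l; by [].
Qed.

Theorem lemma6p5 (n d : nat) (I : {set 'I_d}) (i0 : Idx n d) :
  (* (1) generalized rows *)
  (forall (K : {set 'I_d}) (j : 'I_d -> 'I_n), admissible I i0 (genRow K j)) /\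
  (* (2) generalized diagonals *)
  (forall K : {set 'I_d}, admissible I i0 (genDiag n K)) /\
  (* (3) closure under intersection *)
  (forall C1 C2 : {set Idx n d}, admissible I i0 C1 -> admissible I i0 C2 ->
     admissible I i0 (C1 :&: C2)) /\
  (* (4) *)
  (forall (A : tensor n d) (Kp : {set {set 'I_d}}) (J : {set {set 'I_d}}),
     partition Kp [set: 'I_d] -> partition J (~: I) ->
     (sliceNorm I i0 (hadamard A (indic (Lset n Kp))) J
        <= 2 ^ ((#|Kp| * (#|Kp| - 1)) %/ 2) * sliceNorm I i0 A J)%R) /\
  (* (5) *)
  (forall (A : tensor n d) (v : 'I_d -> 'I_n -> R) (J : {set {set 'I_d}}),
     partition J (~: I) ->
     (sliceNorm I i0 (hadamard A (tprod v)) J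
        <= sliceNorm I i0 A J * \big[Rmult/1%R]_(k < d) infnorm (v k))%R).
Proof.
split; [|split; [|split; [|split]]].
- move=> K j; apply: good_adm => J HJ; exact: good_row.
- move=> K; apply: good_adm => J HJ; exact: good_diag.
- move=> C1 C2 H1 H2 A J HJ.
  have -> : hadamard A (indic (C1 :&: C2)) = hadamard (hadamard A (indic C1)) (indic C2).
    apply: functional_extensionality => i; rewrite /hadamard /indic inE.
    case: (i \in C1); case: (i \in C2); rewrite /=; ring.
  apply: Rle_trans (H2 _ _ HJ) (H1 _ _ HJ).
- move=> A Kp J HK HJ.
  have := @good_L n d I i0 J HJ Kp HK A; rewrite const_pow -(big_mkord xpredT (fun i => i)) bin2_sum bin2 -divn2 subn1.
  by [].
- move=> A v J HJ; rewrite Rmult_comm; exact: (@good_tprod n d I i0 J HJ v A).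
Qed.
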